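(* Let $(|B(\lambda)\rangle,\mathcal{M})$ be an $N$-regular quantum scenario with $M_3=\{C_0,C_1\}$. It is a paradox if and only if $\delta(\lambda,C_0)$ and $\delta(\lambda,C_1)$ are each congruent modulo $2\pi$ to an even multiple of $\frac{\pi}{N}$ and $\beta(\lambda,C_0)-\beta(\lambda,C_1)$ is congruent modulo $2\pi$ to an odd multiple of $\frac{\pi}{N}$.
   Context: $\equiv$ is equality modulo $2\pi$; $\oplus$ is addition mod 2. For $\varphi\in\mathbb{R}$, $E_\varphi=\cos\varphi X+\sin\varphi Y$, with $+1$ eigenvector $|\varphi\rangle=\frac{1}{\sqrt2}(|0\rangle+e^{i\varphi}|1\rangle)$ and $-1$ eigenvector $|\varphi+\pi\rangle$; outcomes $+1,-1$ relabelled $0,1$; measurements identified with angles. A measurement scenario $\mathcal{M}=(M_1,M_2,M_3)$ consists of finite sets $M_i\subseteq[0,\pi)$ of angles for qubit $i$; contexts are triples in $M_1\times M_2\times M_3$. For a three-qubit state $|\psi\rangle$, the event $(A,B,C)\to(a,b,c)$ is impossible if $(\langle A+a\pi|\otimes\langle B+b\pi|\otimes\langle C+c\pi|)|\psi\rangle=0$; $(|\psi\rangle,\mathcal{M})$ is a paradox if for every assignment $g$ of outcomes in $\{0,1\}$ to all measurements of $M_1,M_2,M_3$ (as disjoint sets) some context $(A,B,C)$ has $(A,B,C)\to(g(A),g(B),g(C))$ impossible. For $\lambda\in[0,\frac{\pi}{2})$, $|v_\lambda\rangle=\cos\frac{\lambda}{2}|0\rangle+\sin\frac{\lambda}{2}|1\rangle$,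 $|w_\lambda\rangle=\sin\frac{\lambda}{2}|0\rangle+\cos\frac{\lambda}{2}|1\rangle$, $|B(\lambda)\rangle=\frac{1}{\sqrt2}(|00\rangle|v_\lambda\rangle+|11\rangle|w_\lambda\rangle)$. Define modulo $2\pi$: $\beta(\lambda,\varphi)=\varphi-2\arctan\left(\frac{\cos\frac{\lambda}{2}\sin\varphi}{\sin\frac{\lambda}{2}+\cos\frac{\lambda}{2}\cos\varphi}\right)$ and $\delta(\lambda,\varphi)=\beta(\lambda,\varphi+\pi)-\beta(\lambda,\varphi)$. For $|B(\lambda)\rangle$, $(A,B,C)\to(a,b,c)$ is impossible iff $A+B\equiv\beta(\lambda,C+c\pi)+(1\oplus a\oplus b)\pi$. $(|B(\lambda)\rangle,\mathcal{M})$ is maximally impossible if for every $C\in M_3$ and $z\in\{0,1\}$: every $A\in M_1$ admits $B\in M_2$, $a,b$ with $(A,B,C)\to(a,b,z)$ impossible, and every $B\in M_2$ admits $A\in M_1$, $a,b$ with $(A,B,C)\to(a,b,z)$ impossible. Then $|M_1|=|M_2|=:N$; write $M_1=\{A_0,\dots,A_{N-1}\}$, $M_2=\{B_0,\dots,B_{N-1}\}$, $M_3=\{C_0,\dots,C_{n-1}\}$; for each $(j,l,z)$ there is a unique $k=:K(j,l,z)$ with $A_j+B_k-\beta(\lambda,C_l+z\pi)$ an integer multiple of $\pi$, and $r(j,l,z)\in\{0,1\}$ is defined by $A_j+B_{K(j,l,z)}-\beta(\lambda,C_l+z\pi)\equiv r(j,l,z)\pi$. $\Psi_l(z)$ is the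 $\mathbb{Z}_2$-linear system $\{a_j\oplus b_{K(j,l,z)}=r(j,l,z):j=0,\dots,N-1\}$. With $n=2$, maximal rank means for all $z_0,z_1$ the coefficient matrix of $\Psi_0(z_0)\cup\Psi_1(z_1)$ has rank $2N-1$ over $\mathbb{Z}_2$. $N$-regular: maximally impossible and of maximal rank, with $|M_1|=|M_2|=N$ and $M_3=\{C_0,C_1\}$. *)

(* Defs.v *)
From mathcomp Require Import all_boot all_algebra.
From Stdlib Require Import Reals ZArith.

Set Implicit Arguments.
Unset Strict Implicit.
Unset Printing Implicit Defensive.

Local Open Scope R_scope.

Definition eqm2pi (x y : R) : Prop := exists k : Z, x - y = 2 * PI * IZR k.

Definition int_mult_pi (x : R) : Prop := exists k : Z, x = PI * IZR k.

Definition bitR (b : bool) : R := if b then 1 else 0.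

(** When the denominator vanishes the arctangent argument is ±∞ and
    2·arctan(±∞) = ±π ≡ π (mod 2π); we use this (continuous) value. *)
Definition beta (lam phi : R) : R :=
  let den := sin (lam / 2) + cos (lam / 2) * cos phi in
  if Req_EM_T den 0 then phi - PI
  else phi - 2 * atan (cos (lam / 2) * sin phi / den).

Definition delta (lam phi : R) : R := beta lam (phi + PI) - beta lam phi.

Definition cplx := (R * R)%type.
Definition cadd (z w : cplx) : cplx := (fst z + fst w, snd z + snd w).
Definition cmul (z w : cplx) : cplx :=
  (fst z * fst w - snd z * snd w, fst z * snd w + snd z * fst w).
Definition cconj (z : cplx) : cplx := (fst z, - snd z).
Definition creal (r : R) : cplx := (r, 0).
Definition cexpi (phi : R) : cplx := (cos phi, sin phi).
Definition csum2 (f : bool -> cplx) : cplx := cadd (f false) (f true).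

(** |φ> = (|0> + e^{iφ}|1>)/√2, components indexed by bool (false = |0>). *)
Definition ket (phi : R) (x : bool) : cplx :=
  if x then cmul (creal (/ sqrt 2)) (cexpi phi) else creal (/ sqrt 2).

Definition state3 := bool -> bool -> bool -> cplx.

Definition vlam (lam : R) (z : bool) : R :=
  if z then sin (lam / 2) else cos (lam / 2).
Definition wlam (lam : R) (z : bool) : R :=
  if z then cos (lam / 2) else sin (lam / 2).
Definition Bstate (lam : R) : state3 := fun x y z =>
  match x, y with
  | false, false => creal (/ sqrt 2 * vlam lam z)
  | true, true => creal (/ sqrt 2 * wlam lam z)
  | _, _ => creal 0
  end.

(** (<A+aπ| ⊗ <B+bπ| ⊗ <C+cπ|) |ψ> *)
Definition amplitude (psi : state3) (A B C : R) (a b c : bool) : cplx :=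
  csum2 (fun x => csum2 (fun y => csum2 (fun z =>
    cmul (cconj (ket (A + bitR a * PI) x))
      (cmul (cconj (ket (B + bitR b * PI) y))
        (cmul (cconj (ket (C + bitR c * PI) z)) (psi x y z)))))).

Definition impossible (psi : state3) (A B C : R) (a b c : bool) : Prop :=
  amplitude psi A B C a b c = creal 0.

Definition paradox (psi : state3) (M1 M2 M3 : R -> Prop) : Prop :=
  forall g1 g2 g3 : R -> bool,
    exists A B C, M1 A /\ M2 B /\ M3 C /\
      impossible psi A B C (g1 A) (g2 B) (g3 C).

Definition maximally_impossible (lam : R) (M1 M2 M3 : R -> Prop) : Prop :=
  forall C (z : bool), M3 C ->
    (forall A, M1 A -> exists B a b, M2 B /\ impossible (Bstate lam) A B C a b z) /\
    (forall B, M2 B -> exists A a b, M1 A /\ impossible (Bstate lam) A B C a b z).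

Definition rangeP (N : nat) (f : 'I_N -> R) : R -> Prop :=
  fun x => exists j, x = f j.

Definition pairP (C0 C1 : R) : R -> Prop := fun x => x = C0 \/ x = C1.

Definition is_K (lam : R) (N : nat) (A B : 'I_N -> R) (C : R) (z : bool)
  (K : 'I_N -> 'I_N) : Prop :=
  forall j, int_mult_pi (A j + B (K j) - beta lam (C + bitR z * PI)).

(** Coefficient matrix over Z_2 of Ψ_0(z0) ∪ Ψ_1(z1), variables
    (a_0..a_{N-1}, b_0..b_{N-1}); row j of block l is a_j ⊕ b_{K_l j}. *)
Definition bitF (b : bool) : 'F_2 := if b then (@GRing.one _) else (@GRing.zero _).

Definition coef_mx (N : nat) (K0 K1 : 'I_N -> 'I_N) : 'M['F_2]_(N + N, N + N) :=
  \matrix_(i < N + N, c < N + N)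
    match fintype.split i with
    | inl j => GRing.add (bitF (c == lshift N j)) (bitF (c == rshift N (K0 j)))
    | inr j => GRing.add (bitF (c == lshift N j)) (bitF (c == rshift N (K1 j)))
    end.

(** maximal rank: rank 2N - 1 (as an integer, i.e. rank + 1 = 2N) *)
Definition maximal_rank (lam : R) (N : nat) (A B : 'I_N -> R) (C0 C1 : R) : Prop :=
  forall (z0 z1 : bool) (K0 K1 : 'I_N -> 'I_N),
    is_K lam A B C0 z0 K0 -> is_K lam A B C1 z1 K1 ->
    ((\rank (coef_mx K0 K1)).+1 = N + N)%nat.

Definition angle_ok (x : R) : Prop := 0 <= x < PI.

Definition N_regular (lam : R) (N : nat) (A B : 'I_N -> R) (C0 C1 : R) : Prop :=
  maximally_impossible lam (rangeP A) (rangeP B) (pairP C0 C1) /\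
  maximal_rank lam A B C0 C1.

(* Main.v *)
Require Import Defs.
From mathcomp Require Import all_boot all_algebra.
From Stdlib Require Import Reals ZArith.
From Stdlib Require Import Lra Lia IndefiniteDescription Classical.
From HB Require Import structures.
Import GRing.Theory.

Section LinAlg.
Local Open Scope ring_scope.

Lemma F2_cases (x : 'F_2) : x = 0 \/ x = 1.
Proof. case: x => [[|[|n]]] H. left; exact/val_inj. right; exact/val_inj. done. Qed.

Lemma F2_addxx (x : 'F_2) : x + x = 0.
Proof. by case: (F2_cases x) => ->; apply/val_inj; compute. Qed.

Lemma bitF_xor a b : bitF (xorb a b) = bitF a + bitF b.
Proof. by case: a; case: b; apply/val_inj; compute. Qed.

Lemma bitF_inj : injective bitF.
Proof. case; case => //= /(congr1 val); by compute. Qed.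

Lemma coefL N (K0 K1 : 'I_N -> 'I_N) j c :
  coef_mx K0 K1 (lshift N j) c = bitF (c == lshift N j) + bitF (c == rshift N (K0 j)).
Proof. by rewrite mxE -[lshift N j]/(unsplit (inl j)) unsplitK. Qed.

Lemma coefR N (K0 K1 : 'I_N -> 'I_N) j c :
  coef_mx K0 K1 (rshift N j) c = bitF (c == lshift N j) + bitF (c == rshift N (K1 j)).
Proof. by rewrite mxE -[rshift N j]/(unsplit (inr j)) unsplitK. Qed.

Lemma colsum N (K0 K1 : 'I_N -> 'I_N) c :
  injective K0 -> injective K1 -> \sum_i coef_mx K0 K1 i c = 0.
Proof.
move=> i0 i1.
rewrite big_split_ord /=.
under eq_bigr do rewrite coefL.
under [X in _ + X]eq_bigr do rewrite coefR.
rewrite !big_split /=.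
rewrite -(reindex_inj (P:=xpredT) (F:=fun k => bitF (c == rshift N k)) i0).
rewrite -(reindex_inj (P:=xpredT) (F:=fun k => bitF (c == rshift N k)) i1).
set u := \sum_(i < N) bitF (c == lshift N i).
set v := \sum_(i < N) bitF (c == rshift N i).
rewrite addrACA !F2_addxx; apply/val_inj; by compute.
Qed.

Lemma LA N (K0 K1 : 'I_N -> 'I_N) (rv : 'cV['F_2]_(N + N)) :
  injective K0 -> injective K1 -> (\rank (coef_mx K0 K1)).+1 = (N + N)%nat ->
  (exists x, coef_mx K0 K1 *m x = rv) <-> \sum_i rv i 0 = 0.
Proof.
move=> i0 i1.
have CS : forall c, \sum_i coef_mx K0 K1 i c = 0 by move=> c; exact: colsum.
move: CS; set M := coef_mx K0 K1; clearbody M => CS Hr.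
split.
- case=> x <-.
  under eq_bigr do rewrite mxE.
  rewrite exchange_big /=.
  under eq_bigr do rewrite -mulr_suml CS mul0r.
  by rewrite big1.
- move=> Hs.
  set ones : 'cV['F_2]_(N + N) := const_mx 1.
  have HMW : (M^T <= kermx ones)%MS.
    rewrite sub_kermx; apply/eqP/matrixP => c k.
    rewrite !mxE.
    under eq_bigr do rewrite !mxE mulr1.
    exact: CS.
  have Hro : \rank ones = 1%nat.
    apply/eqP; rewrite eqn_leq rank_leq_col /= lt0n mxrank_eq0.
    have Hp : (0 < N + N)%nat by rewrite -Hr.
    apply/eqP => /matrixP /(_ (Ordinal Hp) 0).
    rewrite !mxE => /(congr1 val); by compute.
  have HWM : (kermx ones <= M^T)%MS.
    have L := mxrank_leqif_sup HMW.
    have E : \rank M = ((N + N) - 1)%nat by move: Hr; move: (\rank M) => r <-; rewrite subn1.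
    by rewrite -L.2 mxrank_ker Hro mxrank_tr E.
  have Hrv : (rv^T <= kermx ones)%MS.
    rewrite sub_kermx; apply/eqP/matrixP => c k.
    rewrite !mxE (ord1 c).
    under eq_bigr do rewrite !mxE mulr1.
    exact: Hs.
  have /submxP [D HD] := submx_trans Hrv HWM.
  exists D^T.
  by rewrite -[rv]trmxK HD trmx_mul trmxK.
Qed.

Lemma split_l N (j : 'I_N) : fintype.split (lshift N j) = inl j.
Proof. exact: (unsplitK (inl j)). Qed.
Lemma split_r N (j : 'I_N) : fintype.split (rshift N j) = inr j.
Proof. exact: (unsplitK (inr j)). Qed.

Lemma sum_pick n (p : 'I_n) (f : 'I_n -> 'F_2) :
  \sum_c bitF (c == p) * f c = f p.
Proof.
rewrite (bigD1 p) //= eqxx big1 ?addr0 /=.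
  by rewrite mul1r.
by move=> i /negbTE ->; rewrite mul0r.
Qed.

Lemma mulL N (K0 K1 : 'I_N -> 'I_N) (x : 'cV['F_2]_(N + N)) j :
  (coef_mx K0 K1 *m x) (lshift N j) 0 = x (lshift N j) 0 + x (rshift N (K0 j)) 0.
Proof.
rewrite mxE.
under eq_bigr do rewrite coefL mulrDl.
by rewrite big_split /= !sum_pick.
Qed.

Lemma mulR N (K0 K1 : 'I_N -> 'I_N) (x : 'cV['F_2]_(N + N)) j :
  (coef_mx K0 K1 *m x) (rshift N j) 0 = x (lshift N j) 0 + x (rshift N (K1 j)) 0.
Proof.
rewrite mxE.
under eq_bigr do rewrite coefR mulrDl.
by rewrite big_split /= !sum_pick.
Qed.

Definition rvec N (r0 r1 : 'I_N -> bool) : 'cV['F_2]_(N + N) :=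
  \col_i match fintype.split i with inl j => bitF (r0 j) | inr j => bitF (r1 j) end.

Arguments rvec {N}.

Lemma bitF_eq1 (y : 'F_2) : bitF (y == 1) = y.
Proof. by case: (F2_cases y) => ->. Qed.

Lemma sys_iff N (K0 K1 : 'I_N -> 'I_N) (r0 r1 : 'I_N -> bool) :
  (exists a b : 'I_N -> bool, forall j,
      xorb (a j) (b (K0 j)) = r0 j /\ xorb (a j) (b (K1 j)) = r1 j)
  <-> exists x, coef_mx K0 K1 *m x = rvec r0 r1.
Proof.
split.
- case=> a [b H].
  exists (\col_c match fintype.split c with inl j => bitF (a j) | inr k => bitF (b k) end).
  apply/matrixP => i k; rewrite (ord1 k) -(splitK i).
  case: (fintype.split i) => j /=.
  + rewrite mulL !mxE !split_l split_r -bitF_xor.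
    by case: (H j) => -> _.
  + rewrite mulR !mxE !split_r split_l -bitF_xor.
    by case: (H j) => _ ->.
- case=> x Hx.
  exists (fun j => x (lshift N j) 0 == 1), (fun k => x (rshift N k) 0 == 1) => j.
  split; apply: bitF_inj; rewrite bitF_xor !bitF_eq1.
  + by rewrite -(mulL _ K0 K1) Hx mxE split_l.
  + by rewrite -(mulR _ K0 K1) Hx mxE split_r.
Qed.

Lemma sum_rvec N (r0 r1 : 'I_N -> bool) :
  \sum_i rvec r0 r1 i 0 = \sum_j bitF (r0 j) + \sum_j bitF (r1 j).
Proof.
rewrite big_split_ord /=.
by congr (_ + _); apply: eq_bigr => j _; rewrite mxE ?split_l ?split_r.
Qed.

End LinAlg.

Open Scope R_scope.

Lemma cos_m1 x : cos x = -1 -> exists k : Z, x = PI + 2 * PI * IZR k.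
Proof.
move=> H.
have H2 : cos (2 * (x/2)) = -1 by replace (2 * (x/2)) with x by field.
rewrite cos_2a_cos in H2.
have H3 : cos (x/2) = 0 by nra.
have [k Hk] := cos_eq_0_0 _ H3.
exists k. lra.
Qed.

Lemma half_pi k : cos (PI + 2 * PI * IZR k) = -1 /\ sin (PI + 2 * PI * IZR k) = 0.
Proof.
set h := (IZR k * PI + PI/2).
have Hc : cos h = 0 by apply: cos_eq_0_1; exists k.
have Hs : sin h * sin h = 1 by have := sin2_cos2 h; rewrite Hc /Rsqr; lra.
replace (PI + 2 * PI * IZR k) with (2 * h) by (rewrite /h; field).
rewrite cos_2a_cos sin_2a Hc. split; ring.
Qed.

Lemma polar lam phi : 0 <= lam < PI / 2 ->
  exists rho psi, rho <> 0 /\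
   sin (lam/2) + cos (lam/2) * cos phi = rho * cos psi /\
   cos (lam/2) * sin phi = rho * sin psi /\
   beta lam phi = phi - 2 * psi.
Proof.
move=> Hl.
set s := sin (lam/2); set c := cos (lam/2).
have Hsl : sin lam < 1.
  rewrite -sin_PI2; apply: sin_increasing_1; lra.
have Hsl0 : 0 <= sin lam by apply: sin_ge_0; lra.
have Hsc : sin lam = 2 * s * c by rewrite /s /c -sin_2a; f_equal; field.
have Hone : s * s + c * c = 1 by have := sin2_cos2 (lam/2); rewrite /Rsqr.
have Hcp := COS_bound phi.
have Hsp := sin2_cos2 phi; rewrite /Rsqr in Hsp.
have Hpos : 0 < (s + c * cos phi) ^ 2 + (c * sin phi) ^ 2 by nra.
rewrite /beta -/s -/c.
case: (Req_EM_T (s + c * cos phi) 0) => Hd.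
- exists (c * sin phi), (PI/2). rewrite cos_PI2 sin_PI2; cbn [is_left].
  split; [|split; [|split]]; try lra.
  move=> H0; rewrite Hd H0 in Hpos; lra.
- set t := c * sin phi / (s + c * cos phi).
  have Ht : 0 < sqrt (1 + Rsqr t) by apply: sqrt_lt_R0; move: (Rle_0_sqr t); lra.
  exists ((s + c * cos phi) * sqrt (1 + Rsqr t)); exists (atan t).
  rewrite cos_atan sin_atan; cbn [is_left].
  split; [|split; [|split]].
  + apply: Rmult_integral_contrapositive; split; lra.
  + field; lra.
  + rewrite /t in Ht *; field; lra.
  + ring.
Qed.

Lemma amp_formula lam x y C a b c :
  let q := / sqrt 2 in
  let phi := C + bitR c * PI in
  let th := x + bitR a * PI + (y + bitR b * PI) in
  let s := sin (lam/2) in let cc := cos (lam/2) in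
  amplitude (Bstate lam) x y C a b c =
  (q^4 * (cc + s * cos phi + cos th * (s + cc * cos phi) - sin th * (cc * sin phi)),
   q^4 * (- (s * sin phi) - cos th * (cc * sin phi) - sin th * (s + cc * cos phi))).
Proof.
move=> q phi th s cc.
rewrite /th. set A' := x + bitR a * PI. set B' := y + bitR b * PI.
rewrite cos_plus sin_plus.
rewrite /amplitude /csum2 /cadd /cmul /cconj /ket /creal /cexpi /Bstate /vlam /wlam /=.
rewrite -/q -/phi -/s -/cc -/A' -/B'.
f_equal; ring.
Qed.

Lemma imp_core lam x y C a b c : 0 <= lam < PI / 2 ->
  (impossible (Bstate lam) x y C a b c <->
   exists k : Z, (x + bitR a * PI + (y + bitR b * PI)) - beta lam (C + bitR c * PI)
                 = PI + 2 * PI * IZR k).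
Proof.
move=> Hl.
rewrite /impossible amp_formula.
set q := / sqrt 2. set phi := C + bitR c * PI.
set th := x + bitR a * PI + (y + bitR b * PI).
have [rho [psi [Hr [HX [HY Hb]]]]] := polar lam phi Hl.
set s := sin (lam/2) in HX HY *. set cc := cos (lam/2) in HX HY *.
have Hq : q ^ 4 <> 0.
  apply: pow_nonzero; rewrite /q; apply: Rinv_neq_0_compat.
  apply: Rgt_not_eq; apply: sqrt_lt_R0; lra.
have Hsp := sin2_cos2 phi; rewrite /Rsqr in Hsp.
have ERe : cc + s * cos phi + cos th * (s + cc * cos phi) - sin th * (cc * sin phi)
   = rho * (cos (psi - phi) + cos (th + psi)).
  transitivity (cos phi * (s + cc * cos phi) + sin phi * (cc * sin phi)
      + cos th * (s + cc * cos phi) - sin th * (cc * sin phi)).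
    have : cc = cc * (sin phi * sin phi + cos phi * cos phi) by rewrite Hsp; ring.
    move=> E; rewrite {1}E; ring.
  rewrite HX HY cos_minus cos_plus; ring.
have EIm : - (s * sin phi) - cos th * (cc * sin phi) - sin th * (s + cc * cos phi)
   = rho * (sin (psi - phi) - sin (th + psi)).
  transitivity (cos phi * (cc * sin phi) - sin phi * (s + cc * cos phi)
      - cos th * (cc * sin phi) - sin th * (s + cc * cos phi)).
    ring.
  rewrite HX HY sin_minus sin_plus; ring.
rewrite ERe EIm /creal.
have Hdiff : th - beta lam phi = (th + psi) + (psi - phi) by rewrite Hb; ring.
rewrite Hdiff.
set al := th + psi. set ga := psi - phi.
split.
have Z0 : forall S, q^4 * (rho * S) = 0 <-> S = 0.
  move=> S; split; last by move=> ->; ring.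
  move=> H; case: (Rmult_integral _ _ H) => // H'.
  by case: (Rmult_integral _ _ H') => // /Hr.
- case=> /Z0 H1 /Z0 H2.
  have Hc : cos (al + ga) = -1.
    rewrite cos_plus.
    have E1 : cos ga = - cos al by lra.
    have E2 : sin ga = sin al by lra.
    rewrite E1 E2. have := sin2_cos2 al; rewrite /Rsqr; lra.
  exact: cos_m1.
- case=> k Hk.
  have [Hc Hs] := half_pi k.
  have Ega : ga = (PI + 2 * PI * IZR k) - al by lra.
  rewrite Ega cos_minus sin_minus Hc Hs.
  f_equal; ring.
Qed.

Lemma odd_r2 r m : Z.odd (r + 2 * m) = Z.odd r.
Proof. rewrite Z.odd_add Z.odd_mul /=; by case: (Z.odd r). Qed.

Lemma odd_ex k : Z.odd k = true -> exists m, k = (2 * m + 1)%Z.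
Proof. by move/Z.odd_spec. Qed.

Lemma even_ex k : Z.odd k = false -> exists m, k = (2 * m)%Z.
Proof. move=> H; apply/Z.even_spec; by rewrite -Z.negb_odd H. Qed.

Lemma imp_iff lam x y C a b c : 0 <= lam < PI / 2 ->
  (impossible (Bstate lam) x y C a b c <->
   exists k : Z, x + y - beta lam (C + bitR c * PI) = PI * IZR k /\
                 Z.odd k = ~~ (xorb a b)).
Proof.
move=> Hl; rewrite imp_core //.
set be := beta lam (C + bitR c * PI).
split.
- case=> k Hk.
  case: a b Hk => [] [] /= Hk.
  + exists (1 + 2 * (k - 1))%Z; rewrite odd_r2; split => //.
    rewrite plus_IZR mult_IZR minus_IZR. lra.
  + exists (0 + 2 * k)%Z; rewrite odd_r2; split => //.
    rewrite plus_IZR mult_IZR. lra.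
  + exists (0 + 2 * k)%Z; rewrite odd_r2; split => //.
    rewrite plus_IZR mult_IZR. lra.
  + exists (1 + 2 * k)%Z; rewrite odd_r2; split => //.
    rewrite plus_IZR mult_IZR. lra.
- case=> k [Hk Ho].
  case: a b Ho => [] [] /= Ho.
  + have [m Hm] := odd_ex _ Ho. exists (m + 1)%Z.
    rewrite Hm plus_IZR mult_IZR in Hk. rewrite plus_IZR. lra.
  + have [m Hm] := even_ex _ Ho. exists m.
    rewrite Hm mult_IZR in Hk. lra.
  + have [m Hm] := even_ex _ Ho. exists m.
    rewrite Hm mult_IZR in Hk. lra.
  + have [m Hm] := odd_ex _ Ho. exists m.
    rewrite Hm plus_IZR mult_IZR in Hk. lra.
Qed.


HB.instance Definition _ := Monoid.isComLaw.Build Z 0%Z Z.add Z.add_assoc Z.add_comm Z.add_0_l.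
HB.instance Definition _ := Monoid.isComLaw.Build R 0%R Rplus (fun x y z => esym (Rplus_assoc x y z)) Rplus_comm Rplus_0_l.

Lemma uniq_y x y1 y2 be k1 k2 : 0 <= y1 < PI -> 0 <= y2 < PI ->
  x + y1 - be = PI * IZR k1 -> x + y2 - be = PI * IZR k2 -> y1 = y2 /\ k1 = k2.
Proof.
move=> h1 h2 e1 e2.
have Hd : y1 - y2 = PI * IZR (k1 - k2) by rewrite minus_IZR; lra.
have Hpi := PI_RGT_0.
case: (Z.eq_dec k1 k2) => Hk.
- split => //. rewrite Hk Z.sub_diag /= in Hd. lra.
- exfalso. case: (Z_lt_le_dec (k1 - k2) 0) => Hs.
  + have : IZR (k1 - k2) <= -1 by apply: IZR_le; lia.
    nra.
  + have : 1 <= IZR (k1 - k2) by apply: IZR_le; lia.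
    nra.
Qed.

Lemma sum_const_R N (c : R) : \big[Rplus/0]_(j < N) c = INR N * c.
Proof.
elim: N => [|n IH]; first by rewrite big_ord0 /=; ring.
rewrite big_ord_recr IH S_INR /=; ring.
Qed.

Lemma bool_neq (x y : bool) : x <> y -> x = ~~ y.
Proof. by case: x; case: y. Qed.

Lemma E_even (d : R) (t0 t1 : Z) (n : nat) : (0 < n)%nat ->
  PI * (IZR t1 - IZR t0) = - (INR n * d) ->
  (Z.odd t0 = Z.odd t1 <-> exists m : Z, eqm2pi d (2 * IZR m * PI / INR n)).
Proof.
move=> Hn H.
have Hn' : INR n <> 0 by apply: not_0_INR => H0; rewrite H0 in Hn.
have Hpi := PI_RGT_0.
split.
- move=> Ho.
  have Hod : Z.odd (t1 - t0) = false by rewrite Z.odd_sub Ho; case: (Z.odd t1).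
  have [m Hm] := even_ex _ Hod.
  exists (- m)%Z; exists 0%Z.
  have E : IZR t1 - IZR t0 = 2 * IZR m by rewrite -minus_IZR Hm mult_IZR.
  rewrite E in H. rewrite opp_IZR.
  apply: (Rmult_eq_reg_l (INR n)) => //.
  field_simplify => //. nra.
- case=> m [k Hk].
  have Hd : d = 2 * IZR m * PI / INR n + 2 * PI * IZR k by lra.
  have E : IZR t1 = IZR (t0 + 2 * (- m - k * Z.of_nat n)).
    apply: (Rmult_eq_reg_l PI); last lra.
    rewrite plus_IZR mult_IZR minus_IZR opp_IZR mult_IZR -INR_IZR_INZ.
    rewrite Hd in H. field_simplify in H => //.
    apply: (Rmult_eq_reg_l (INR n)) => //.
    field_simplify => //. nra.
  by rewrite (eq_IZR _ _ E) odd_r2.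
Qed.

Lemma E_odd (d : R) (t0 t1 : Z) (n : nat) : (0 < n)%nat ->
  PI * (IZR t1 - IZR t0) = INR n * d ->
  (xorb (Z.odd t0) (Z.odd t1) = true <->
   exists m : Z, eqm2pi d ((2 * IZR m + 1) * PI / INR n)).
Proof.
move=> Hn H.
have Hn' : INR n <> 0 by apply: not_0_INR => H0; rewrite H0 in Hn.
have Hpi := PI_RGT_0.
split.
- move=> Ho.
  have Hod : Z.odd (t1 - t0) = true.
    by rewrite Z.odd_sub; move: Ho; case: (Z.odd t1); case: (Z.odd t0).
  have [m Hm] := odd_ex _ Hod.
  exists m; exists 0%Z.
  have E : IZR t1 - IZR t0 = 2 * IZR m + 1 by rewrite -minus_IZR Hm plus_IZR mult_IZR.
  rewrite E in H.
  apply: (Rmult_eq_reg_l (INR n)) => //.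
  field_simplify => //. nra.
- case=> m [k Hk].
  have Hd : d = (2 * IZR m + 1) * PI / INR n + 2 * PI * IZR k by lra.
  have E : IZR t1 = IZR ((t0 + 1) + 2 * (m + k * Z.of_nat n)).
    apply: (Rmult_eq_reg_l PI); last lra.
    rewrite !plus_IZR mult_IZR plus_IZR mult_IZR -INR_IZR_INZ.
    rewrite Hd in H. field_simplify in H => //.
    apply: (Rmult_eq_reg_l (INR n)) => //.
    field_simplify => //. nra.
  rewrite (eq_IZR _ _ E) odd_r2 Z.odd_add /=.
  by case: (Z.odd t0).
Qed.

Definition lookup N (f : 'I_N -> R) (v : 'I_N -> bool) (x : R) : bool :=
  match [pick j | if Req_EM_T (f j) x then true else false] with
  | Some j => v j | None => false end.

Arguments lookup {N}.

Lemma lookupE N (f : 'I_N -> R) v j : injective f -> lookup f v (f j) = v j.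
Proof.
move=> fi; rewrite /lookup; case: pickP => [j' |].
- case: Req_EM_T => // H _; by rewrite (fi _ _ H).
- by move=> /(_ j); case: Req_EM_T.
Qed.

Section F2S.
Local Open Scope ring_scope.
Lemma bitF_sum_odd N (k : 'I_N -> Z) :
  bitF (Z.odd (\big[Z.add/0%Z]_(j < N) k j)) = \sum_(j < N) bitF (Z.odd (k j)).
Proof.
apply: (big_morph (fun z => bitF (Z.odd z))) => //.
by move=> x y; rewrite Z.odd_add bitF_xor.
Qed.

Lemma bitF_add0 x y : bitF x + bitF y = 0 <-> xorb x y = false.
Proof.
rewrite -bitF_xor; split; last by move=> ->.
by move=> H; apply: bitF_inj; rewrite H.
Qed.
End F2S.

Lemma bool4 (f g : bool -> bool) :
  (forall z0 z1, xorb (f z0) (g z1) = true) <->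
  (f false = f true /\ g false = g true /\ xorb (f false) (g false) = true).
Proof.
split.
- move=> H; move: (H false false) (H true false) (H false true) (H true true).
  by case: (f false); case: (f true); case: (g false); case: (g true).
- case=> e1 [e2 e3] [] []; by rewrite -?e1 -?e2.
Qed.

Theorem lemma19 (lam : R) (N : nat) (A B : 'I_N -> R) (C0 C1 : R) :
  (0 <= lam < PI / 2)%R ->
  injective A -> injective B -> C0 <> C1 ->
  (forall j, angle_ok (A j)) -> (forall j, angle_ok (B j)) ->
  angle_ok C0 -> angle_ok C1 ->
  N_regular lam A B C0 C1 ->
  (paradox (Bstate lam) (rangeP A) (rangeP B) (pairP C0 C1) <->
   ((exists m : Z, eqm2pi (delta lam C0) (2 * IZR m * PI / INR N)) /\
    (exists m : Z, eqm2pi (delta lam C1) (2 * IZR m * PI / INR N)) /\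
    (exists m : Z, eqm2pi (beta lam C0 - beta lam C1)
                          ((2 * IZR m + 1) * PI / INR N)))%R).
Proof.
move=> Hl iA iB hC aA aB aC0 aC1 [Hmi Hmr].
pose Cl (l : bool) := if l then C1 else C0.
have HCl : forall l, pairP C0 C1 (Cl l) by case; [right|left].
have HK : forall l z j, exists k, int_mult_pi (A j + B k - beta lam (Cl l + bitR z * PI)).
  move=> l z j.
  have [H1 _] := Hmi (Cl l) z (HCl l).
  have [B' [a [b [[k ->] Himp]]]] := H1 (A j) (ex_intro _ j erefl).
  have [kk [Hkk _]] := (imp_iff _ _ _ _ _ _ _ Hl).1 Himp.
  by exists k, kk.
pose K l z j := proj1_sig (constructive_indefinite_description _ (HK l z j)).
have HKK : forall l z j, int_mult_pi (A j + B (K l z j) - beta lam (Cl l + bitR z * PI)).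
  move=> l z j; exact: (proj2_sig (constructive_indefinite_description _ (HK l z j))).
pose kk l z j := proj1_sig (constructive_indefinite_description _ (HKK l z j)).
have Hkk : forall l z j, A j + B (K l z j) - beta lam (Cl l + bitR z * PI) = PI * IZR (kk l z j).
  move=> l z j; exact: (proj2_sig (constructive_indefinite_description _ (HKK l z j))).
clearbody kk.
have Kinj : forall l z, injective (K l z).
  move=> l z j1 j2 E.
  have e1 := Hkk l z j1. have e2 := Hkk l z j2. rewrite E in e1.
  have [h _] := uniq_y (B (K l z j2)) (A j1) (A j2) (beta lam (Cl l + bitR z * PI))
                 (kk l z j1) (kk l z j2) (aA j1) (aA j2) ltac:(lra) ltac:(lra).
  exact: iA.
have Ktk : forall l z j k a b,
    impossible (Bstate lam) (A j) (B k) (Cl l) a b z <->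
    k = K l z j /\ xorb a b = ~~ Z.odd (kk l z j).
  move=> l z j k a b; rewrite imp_iff //; split.
  - case=> k' [e o].
    have [h1 h2] := uniq_y (A j) (B k) (B (K l z j)) _ _ _ (aB k) (aB _) e (Hkk l z j).
    split; first exact: iB.
    by rewrite -h2 o; case: (xorb a b).
  - case=> -> o. exists (kk l z j); split => //. by rewrite o; case: (Z.odd _).
have HKK' : forall l z, is_K lam A B (Cl l) z (K l z) by move=> l z j; exact: HKK.
have Npos : (0 < N)%nat.
  have H := Hmr false false _ _ (HKK' false false) (HKK' true false).
  have : (0 < N + N)%nat by rewrite -H.
  by rewrite addn_gt0 orbb.
pose Sys z0 z1 := exists a b : 'I_N -> bool, forall j,
  xorb (a j) (b (K false z0 j)) = Z.odd (kk false z0 j) /\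
  xorb (a j) (b (K true z1 j)) = Z.odd (kk true z1 j).
have P4 : paradox (Bstate lam) (rangeP A) (rangeP B) (pairP C0 C1) <->
          forall z0 z1, ~ Sys z0 z1.
  split.
  - move=> Hp z0 z1 [a [b Hs]].
    have [A' [B' [C' [[j ->] [[k ->] [HC Himp]]]]]] :=
      Hp (lookup A a) (lookup B b) (fun x => if Req_EM_T x C0 then z0 else z1).
    rewrite !lookupE // in Himp.
    case: HC => HC; rewrite HC in Himp; cbv beta in Himp.
    + destruct (Req_EM_T C0 C0) as [e0|]; last by [].
      have [Ek Ex] := (Ktk false z0 j k (a j) (b k)).1 Himp.
      rewrite Ek in Ex. case: (Hs j) => E0 _. rewrite E0 in Ex.
      by case: (Z.odd _) Ex.
    + destruct (Req_EM_T C1 C0) as [E|e1]; first by case: hC; rewrite E.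
      have [Ek Ex] := (Ktk true z1 j k (a j) (b k)).1 Himp.
      rewrite Ek in Ex. case: (Hs j) => _ E0. rewrite E0 in Ex.
      by case: (Z.odd _) Ex.
  - move=> Hn g1 g2 g3. apply: NNPP => Hno.
    apply: (Hn (g3 C0) (g3 C1)).
    exists (fun j => g1 (A j)), (fun k => g2 (B k)) => j.
    split.
    + apply: NNPP => Hne; apply: Hno.
      exists (A j), (B (K false (g3 C0) j)), C0.
      split; first by exists j.
      split; first by eexists.
      split; first by left.
      apply: (Ktk false (g3 C0) j _ _ _).2.
      split => //. exact: bool_neq.
    + apply: NNPP => Hne; apply: Hno.
      exists (A j), (B (K true (g3 C1) j)), C1.
      split; first by exists j.
      split; first by eexists.
      split; first by right.
      apply: (Ktk true (g3 C1) j _ _ _).2.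
      split => //. exact: bool_neq.
pose T l z := \big[Z.add/0%Z]_(j < N) kk l z j.
have P5 : forall z0 z1, Sys z0 z1 <-> xorb (Z.odd (T false z0)) (Z.odd (T true z1)) = false.
  move=> z0 z1.
  rewrite /Sys sys_iff LA; last 3 first.
  - exact: Kinj. - exact: Kinj. - exact: Hmr.
  rewrite sum_rvec -!bitF_sum_odd.
  exact: bitF_add0.
have Hsum : forall (F G : 'I_N -> R),
    \big[Rplus/0]_j (F j + G j) = \big[Rplus/0]_j F j + \big[Rplus/0]_j G j.
  by move=> F G; rewrite big_split.
pose SA := \big[Rplus/0]_(j < N) A j.
pose SB := \big[Rplus/0]_(j < N) B j.
have HT : forall l z, PI * IZR (T l z) = SA + SB - INR N * beta lam (Cl l + bitR z * PI).
  move=> l z.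
  have -> : PI * IZR (T l z) = \big[Rplus/0]_(j < N) (PI * IZR (kk l z j)).
    apply: (big_morph (fun x : Z => PI * IZR x)).
    - by move=> x y; rewrite plus_IZR; ring.
    - by rewrite Rmult_0_r.
  set be := beta lam (Cl l + bitR z * PI).
  transitivity (\big[Rplus/0]_(j < N) (A j + B (K l z j) + - be)).
    apply: eq_bigr => j _; rewrite -Hkk; rewrite /be; ring.
  rewrite !Hsum sum_const_R.
  have RB : \big[Rplus/0]_(j < N) B (K l z j) = \big[Rplus/0]_(j < N) B j.
    by rewrite -(reindex_inj (P:=xpredT) (F:=B) (Kinj l z)).
  rewrite RB /SA /SB. set X := bigop.body _ _ _. set X2 := bigop.body _ _ _. ring.
rewrite P4.
have Hall : (forall z0 z1, ~ Sys z0 z1) <->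
            forall z0 z1, xorb (Z.odd (T false z0)) (Z.odd (T true z1)) = true.
  split => H z0 z1.
  - move: (H z0 z1); rewrite P5; by case: xorb.
  - by rewrite P5 (H z0 z1).
rewrite Hall.
have B4 := bool4 (fun z => Z.odd (T false z)) (fun z => Z.odd (T true z)).
simpl in B4. rewrite B4.
have e00 : Cl false + bitR false * PI = C0 by rewrite /= Rmult_0_l Rplus_0_r.
have e01 : Cl false + bitR true * PI = C0 + PI by rewrite /= Rmult_1_l.
have e10 : Cl true + bitR false * PI = C1 by rewrite /= Rmult_0_l Rplus_0_r.
have e11 : Cl true + bitR true * PI = C1 + PI by rewrite /= Rmult_1_l.
have E1 := E_even (delta lam C0) (T false false) (T false true) N Npos
  ltac:(rewrite Rmult_minus_distr_l !HT e00 e01 /delta; ring).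
have E2 := E_even (delta lam C1) (T true false) (T true true) N Npos
  ltac:(rewrite Rmult_minus_distr_l !HT e10 e11 /delta; ring).
have E3 := E_odd (beta lam C0 - beta lam C1) (T false false) (T true false) N Npos
  ltac:(rewrite Rmult_minus_distr_l !HT e00 e10; ring).
by rewrite E1 E2 E3.
Qed.
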